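(* For all runtime type environments $\Delta_1,\Delta_2$: if $\mathsf{safe}(\Delta_1)$, $\mathsf{safe}(\Delta_2)$, $\mathrm{snames}(\Delta_1)\cap\mathrm{snames}(\Delta_2)=\emptyset$, and the disjoint union $\Delta_1,\Delta_2$ is defined, then $\mathsf{safe}(\Delta_1,\Delta_2)$.
   Context: Session types: $S ::= \oplus\mathtt{p}\{\ell_i(A_i).S_i\}_{i\in I} \mid \&\mathtt{p}\{\ell_i(A_i).S_i\}_{i\in I} \mid \mu X.S \mid X \mid \mathsf{end}$, where $\mathtt{p},\mathtt{q}$ range over roles, $\ell$ over message labels and $A$ over payload types (compared by syntactic equality). Recursive session types are treated equi-recursively. Queue types are $Q ::= \epsilon \mid (\mathtt{p}\to\mathtt{q} : \ell(A))\cdot Q$, identified up to the congruence $\equiv$ that swaps two adjacent entries $(\mathtt{p}_1\to\mathtt{q}_1:\ell_1(A_1))$ and $(\mathtt{p}_2\to\mathtt{q}_2:\ell_2(A_2))$ whenever $\mathtt{p}_1\neq\mathtt{p}_2$ or $\mathtt{q}_1\neq\mathtt{q}_2$. A runtime type environment $\Delta$ is a finite collection of entries of the forms: actor name $a$; access point name $p$; polarised initialisation token $\iota^{+}:S$ or $\iota^{-}:S$; session endpoint $s[\mathtt{p}]:S$; session queue $s:Q$; each entry's subject occurs at most once, and $\Delta_1,\Delta_2$ denotes disjoint union (defined only when the subjects are disjoint). The congruence $\equiv$ on queue types extends to environments. Labelled transitions on environments ($j\in I$ where applicable): (Send) $\Delta, s[\mathtt{p}]:\oplus\mathtt{q}\{\ell_i(A_i).S_i\}_{i\in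 I}, s:Q \to \Delta, s[\mathtt{p}]:S_j, s:Q\cdot(\mathtt{p}\to\mathtt{q}:\ell_j(A_j))$; (Recv) $\Delta, s[\mathtt{p}]:\&\mathtt{q}\{\ell_i(A_i).S_i\}_{i\in I}, s:(\mathtt{q}\to\mathtt{p}:\ell_j(A_j))\cdot Q \to \Delta, s[\mathtt{p}]:S_j, s:Q$; (End) $\Delta, s[\mathtt{p}]:\mathsf{end} \to \Delta$; (Rec) $\Delta, s[\mathtt{p}]:\mu X.S \to \Delta'$ whenever $\Delta, s[\mathtt{p}]:S\{\mu X.S/X\}\to\Delta'$. Write $\Delta \Longrightarrow \Delta'$ if $\Delta\equiv\Delta_a\to\Delta_b\equiv\Delta'$ for some $\Delta_a,\Delta_b$. The predicate $\mathsf{safe}$ is the largest predicate on environments such that $\mathsf{safe}(\Delta)$ implies: (i) if $\Delta=\Delta_0, s[\mathtt{p}]:\&\mathtt{q}\{\ell_i(A_i).S_i\}_{i\in I}, s:Q$ with $Q\equiv(\mathtt{q}\to\mathtt{p}:\ell_j(B_j))\cdot Q'$, then $j\in I$ and $B_j=A_j$; (ii) if $\Delta=\Delta_0, s[\mathtt{p}]:\mu X.S$ then $\mathsf{safe}(\Delta_0, s[\mathtt{p}]:S\{\mu X.S/X\})$; (iii) if $\Delta\Longrightarrow\Delta'$ then $\mathsf{safe}(\Delta')$. The set of session names of an environment is $\mathrm{snames}(\Delta)=\{s \mid s:Q\in\Delta \text{ for some } Q, \text{ or } s[\mathtt{p}]\in\mathrm{dom}(\Delta)\text{ for some role }\mathtt{p}\}$.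 *)

(* Defs.v *)
From Stdlib Require Import List Permutation Relations.
Import ListNotations.

Set Implicit Arguments.

Section Env.

(* Roles, message labels and payload types are abstract; payload types are
   compared by syntactic (Leibniz) equality. *)
Context (Role Label Payload : Type).

(* Session types, recursion variables in de Bruijn notation:
   [SVar n] refers to the n-th enclosing [SRec]. A branch list
   [bs : list (Label * Payload * stype)] represents {l_i(A_i).S_i}_{i in I}. *)
Inductive stype : Type :=
| SSel (q : Role) (bs : list (Label * Payload * stype))
| SBra (q : Role) (bs : list (Label * Payload * stype))
| SRec (S : stype)
| SVar (n : nat)
| SEnd.

Fixpoint lift (c : nat) (T : stype) : stype :=
  match T with
  | SSel q bs => SSel q (map (fun b => match b with (l, a, U) => (l, a, lift c U) end) bs)
  | SBra q bs => SBra q (map (fun b => match b with (l, a, U) => (l, a, lift c U) end) bs)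
  | SRec U => SRec (lift (S c) U)
  | SVar n => if Nat.ltb n c then SVar n else SVar (S n)
  | SEnd => SEnd
  end.

(* [subst k V T] : T{V/k}, removing the binder index k. *)
Fixpoint subst (k : nat) (V : stype) (T : stype) : stype :=
  match T with
  | SSel q bs => SSel q (map (fun b => match b with (l, a, U) => (l, a, subst k V U) end) bs)
  | SBra q bs => SBra q (map (fun b => match b with (l, a, U) => (l, a, subst k V U) end) bs)
  | SRec U => SRec (subst (S k) (lift 0 V) U)
  | SVar n => if Nat.eqb n k then V
              else if Nat.ltb n k then SVar n else SVar (pred n)
  | SEnd => SEnd
  end.

Definition unfold (T : stype) : stype := subst 0 (SRec T) T.

(* A queue entry (p -> q : l(A)) is (p, q, l, A). *)
Definition msg : Type := (Role * Role * Label * Payload)%type.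
Definition queue : Type := list msg.

Definition msg_from (m : msg) : Role := match m with (p, _, _, _) => p end.
Definition msg_to (m : msg) : Role := match m with (_, q, _, _) => q end.

Inductive qswap : queue -> queue -> Prop :=
| qswap_intro (Q1 Q2 : queue) (m1 m2 : msg) :
    msg_from m1 <> msg_from m2 \/ msg_to m1 <> msg_to m2 ->
    qswap (Q1 ++ m1 :: m2 :: Q2) (Q1 ++ m2 :: m1 :: Q2).

Definition qequiv : queue -> queue -> Prop := clos_refl_sym_trans queue qswap.

Inductive entry : Type :=
| EActor (a : nat)
| EAccess (p : nat)
| EToken (i : nat) (pos : bool) (T : stype)     (* iota^+ : S (pos = true), iota^- : S *)
| EEndp (s : nat) (p : Role) (T : stype)
| EQueue (s : nat) (Q : queue).

Inductive subject : Type :=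
| SubActor (a : nat)
| SubAccess (p : nat)
| SubToken (i : nat) (pos : bool)
| SubEndp (s : nat) (p : Role)
| SubQueue (s : nat).

Definition subj (e : entry) : subject :=
  match e with
  | EActor a => SubActor a
  | EAccess p => SubAccess p
  | EToken i b _ => SubToken i b
  | EEndp s p _ => SubEndp s p
  | EQueue s _ => SubQueue s
  end.

(* A runtime type environment: a finite collection of entries, represented
   by a list considered up to permutation. *)
Definition env : Type := list entry.

Definition env_wf (D : env) : Prop := NoDup (map subj D).

Definition env_union_defined (D1 D2 : env) : Prop := env_wf (D1 ++ D2).

Inductive entry_equiv : entry -> entry -> Prop :=
| ee_refl e : entry_equiv e e
| ee_queue s Q Q' : qequiv Q Q' -> entry_equiv (EQueue s Q) (EQueue s Q').

Definition env_equiv (D D' : env) : Prop :=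
  exists D'', Permutation D D'' /\ Forall2 entry_equiv D'' D'.

(* Labelled transitions (labels omitted, they play no role in safety). *)
Inductive env_step : env -> env -> Prop :=
| st_send D D' D0 s p q bs Q l A T :
    Permutation D (D0 ++ [EEndp s p (SSel q bs); EQueue s Q]) ->
    In (l, A, T) bs ->
    Permutation D' (D0 ++ [EEndp s p T; EQueue s (Q ++ [(p, q, l, A)])]) ->
    env_step D D'
| st_recv D D' D0 s p q bs Q l A T :
    Permutation D (D0 ++ [EEndp s p (SBra q bs); EQueue s ((q, p, l, A) :: Q)]) ->
    In (l, A, T) bs ->
    Permutation D' (D0 ++ [EEndp s p T; EQueue s Q]) ->
    env_step D D'
| st_end D D' D0 s p :
    Permutation D (D0 ++ [EEndp s p SEnd]) ->
    Permutation D' D0 ->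
    env_step D D'
| st_rec D D' D0 s p T :
    Permutation D (D0 ++ [EEndp s p (SRec T)]) ->
    env_step (D0 ++ [EEndp s p (unfold T)]) D' ->
    env_step D D'.

Definition env_step_cong (D D' : env) : Prop :=
  exists Da Db, env_equiv D Da /\ env_step Da Db /\ env_equiv Db D'.

Definition safety_prop (P : env -> Prop) : Prop :=
  forall D, P D ->
    (forall D0 s p q bs Q l B Q',
        Permutation D (D0 ++ [EEndp s p (SBra q bs); EQueue s Q]) ->
        qequiv Q ((q, p, l, B) :: Q') ->
        exists T, In (l, B, T) bs)
    /\ (forall D0 s p T,
        Permutation D (D0 ++ [EEndp s p (SRec T)]) ->
        P (D0 ++ [EEndp s p (unfold T)]))
    /\ (forall D', env_step_cong D D' -> P D').

(* safe is the largest safety property. *)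
Definition safe (D : env) : Prop :=
  exists P, safety_prop P /\ P D.

Definition in_snames (s : nat) (D : env) : Prop :=
  exists e, In e D /\
    match e with
    | EQueue s' _ => s' = s
    | EEndp s' _ _ => s' = s
    | _ => False
    end.

End Env.

(* Main.v *)
Require Import Defs.
From Stdlib Require Import List Permutation Relations.
Import ListNotations.
Set Implicit Arguments.

Section S.
Context (Role Label Payload : Type).
Notation E := (env Role Label Payload).
Notation entry := (entry Role Label Payload).
Notation ee := (@entry_equiv Role Label Payload).
Notation eqv := (@env_equiv Role Label Payload).

Lemma F2_flip A B (R : A -> B -> Prop) l1 l2 :
  Forall2 R l1 l2 -> Forall2 (fun b a => R a b) l2 l1.
Proof. induction 1; constructor; auto. Qed.

Lemma F2_perm_r A B (R : A -> B -> Prop) l1 l2 l2' :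
  Forall2 R l1 l2 -> Permutation l2 l2' ->
  exists l1', Permutation l1 l1' /\ Forall2 R l1' l2'.
Proof.
  intros H P. apply F2_flip in H.
  destruct (Permutation_Forall2 P H) as [l1' [P1 H1]].
  exists l1'. split; auto. apply F2_flip in H1. exact H1.
Qed.

Lemma F2_mono A B (R R' : A -> B -> Prop) l1 l2 :
  (forall a b, R a b -> R' a b) -> Forall2 R l1 l2 -> Forall2 R' l1 l2.
Proof. intros HR; induction 1; constructor; auto. Qed.

Lemma F2_trans A (R : A -> A -> Prop) l1 l2 l3 :
  (forall a b c, R a b -> R b c -> R a c) ->
  Forall2 R l1 l2 -> Forall2 R l2 l3 -> Forall2 R l1 l3.
Proof.
  intros HT H; revert l3; induction H; intros l3 H'; inversion H'; subst;
  constructor; eauto.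
Qed.

Lemma F2_refl A (R : A -> A -> Prop) l : (forall a, R a a) -> Forall2 R l l.
Proof. intros; induction l; constructor; auto. Qed.

Lemma ee_sym a b : ee a b -> ee b a.
Proof. destruct 1; constructor. apply rst_sym; auto. Qed.

Lemma ee_trans a b c : ee a b -> ee b c -> ee a c.
Proof.
  destruct 1; intro H'; auto. inversion H'; subst. constructor; auto.
  constructor. eapply rst_trans; eauto.
Qed.

Lemma eqv_refl D : eqv D D.
Proof. exists D; split; auto. apply F2_refl. constructor. Qed.

Lemma eqv_perm D D' : Permutation D D' -> eqv D D'.
Proof. exists D'; split; auto. apply F2_refl. constructor. Qed.

Lemma eqv_sym D D' : eqv D D' -> eqv D' D.
Proof.
  intros [X [P H]]. apply F2_flip in H.
  apply Permutation_sym in P. destruct (F2_perm_r H P) as [Y [P1 H1]].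
  exists Y; split; auto. eapply F2_mono; [|exact H1]. intros; apply ee_sym; auto.
Qed.

Lemma eqv_trans D1 D2 D3 : eqv D1 D2 -> eqv D2 D3 -> eqv D1 D3.
Proof.
  intros [X [P H]] [Y [P' H']].
  destruct (F2_perm_r H P') as [Z [PZ HZ]].
  exists Z; split. eapply perm_trans; eauto.
  eapply F2_trans; eauto. apply ee_trans.
Qed.

Lemma eqv_app A1 A2 B1 B2 : eqv A1 B1 -> eqv A2 B2 -> eqv (A1 ++ A2) (B1 ++ B2).
Proof.
  intros [X [P H]] [Y [P' H']]. exists (X ++ Y); split.
  apply Permutation_app; auto. apply Forall2_app; auto.
Qed.

Lemma eqv_split D F0 F1 : eqv D (F0 ++ F1) ->
  exists D0 D1, Permutation D (D0 ++ D1) /\ Forall2 ee D0 F0 /\ Forall2 ee D1 F1.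
Proof.
  intros [X [P H]]. apply Forall2_app_inv_r in H.
  destruct H as [l1 [l2 [H1 [H2 ->]]]]. exists l1, l2; auto.
Qed.

Lemma F2_eqv A B : Forall2 ee A B -> eqv A B.
Proof. intros; exists A; split; auto. Qed.


Definition disj (A B : E) := forall s, in_snames s A -> in_snames s B -> False.
Definition named (s : nat) (e : entry) : Prop :=
  match e with
  | EQueue s' _ => s' = s
  | EEndp s' _ _ => s' = s
  | _ => False
  end.

Lemma sn_In s e (D : E) : In e D -> named s e -> in_snames s D.
Proof. intros; exists e; split; auto. Qed.

Lemma sn_perm s (D D' : E) : Permutation D D' -> in_snames s D -> in_snames s D'.
Proof. intros P [e [H1 H2]]. exists e; split; auto. eapply Permutation_in; eauto. Qed.

Lemma sn_app s (A B : E) : in_snames s (A ++ B) <-> in_snames s A \/ in_snames s B.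
Proof.
  split.
  - intros [e [H1 H2]]. apply in_app_or in H1. destruct H1; [left|right]; exists e; auto.
  - intros [[e [H1 H2]]|[e [H1 H2]]]; exists e; split; auto; apply in_or_app; auto.
Qed.

Lemma ee_named s a b : ee a b -> named s a -> named s b.
Proof. destruct 1; auto. Qed.

Lemma sn_F2 s (A B : E) : Forall2 ee A B -> in_snames s A -> in_snames s B.
Proof.
  induction 1; intros [e [H1 H2]]; [destruct H1|].
  destruct H1 as [<-|H1].
  - exists y; split; [left; auto|]. eapply ee_named; eauto.
  - destruct IHForall2 as [e' [H3 H4]]. exists e; auto. exists e'; split; auto. right; auto.
Qed.

Lemma sn_F2' s (A B : E) : Forall2 ee A B -> in_snames s B -> in_snames s A.
Proof.
  intros H. apply sn_F2. apply F2_flip in H. eapply F2_mono; [|exact H].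
  intros; apply ee_sym; auto.
Qed.

Lemma rm_last (X D0 Y : E) a : Permutation X (D0 ++ [a]) -> Permutation X (a :: Y) -> Permutation D0 Y.
Proof.
  intros H1 H2. apply Permutation_cons_inv with a.
  eapply perm_trans. apply Permutation_cons_append.
  eapply perm_trans. apply Permutation_sym; eauto. auto.
Qed.

Lemma loc1_left (F1 F2 D0 : E) a : In a F1 -> Permutation (F1 ++ F2) (D0 ++ [a]) ->
  exists Xr, Permutation F1 (Xr ++ [a]) /\ Permutation D0 (Xr ++ F2).
Proof.
  intros Hin P. destruct (in_split _ _ Hin) as [l1 [l2 ->]].
  exists (l1 ++ l2). split.
  - eapply perm_trans. apply Permutation_sym, Permutation_middle. apply Permutation_cons_append.
  - eapply rm_last. apply P. rewrite <- !app_assoc. simpl.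
    apply Permutation_sym. apply Permutation_middle.
Qed.

Lemma loc1 (F1 F2 D0 : E) a : Permutation (F1 ++ F2) (D0 ++ [a]) ->
  (exists Xr, Permutation F1 (Xr ++ [a]) /\ Permutation D0 (Xr ++ F2)) \/
  (exists Xr, Permutation F2 (Xr ++ [a]) /\ Permutation D0 (Xr ++ F1)).
Proof.
  intros P.
  assert (Hin : In a (F1 ++ F2)).
  { eapply Permutation_in. apply Permutation_sym, P. apply in_or_app; right; left; auto. }
  apply in_app_or in Hin. destruct Hin as [Hin|Hin].
  - left. eapply loc1_left; eauto.
  - right. eapply loc1_left; eauto. eapply perm_trans; [apply Permutation_app_comm|exact P].
Qed.

Lemma loc2_left (F1 F2 D0 : E) s a b : In a F1 -> named s a -> named s b -> disj F1 F2 ->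
  Permutation (F1 ++ F2) (D0 ++ [a; b]) ->
  exists Xr, Permutation F1 (Xr ++ [a; b]) /\ Permutation D0 (Xr ++ F2).
Proof.
  intros Hin Ha Hb Hd P. destruct (in_split _ _ Hin) as [l1 [l2 ->]].
  assert (P2 : Permutation ((l1 ++ l2) ++ F2) (D0 ++ [b])).
  { apply Permutation_cons_inv with a.
    assert (Q1 : Permutation (a :: (l1 ++ l2) ++ F2) ((l1 ++ a :: l2) ++ F2)).
    { rewrite <- !app_assoc. simpl. apply Permutation_middle. }
    eapply perm_trans. exact Q1. eapply perm_trans. exact P.
    apply Permutation_sym, Permutation_middle. }
  assert (Hb' : In b ((l1 ++ l2) ++ F2)).
  { eapply Permutation_in. apply Permutation_sym, P2. apply in_or_app; right; left; auto. }
  apply in_app_or in Hb'. destruct Hb' as [Hb'|Hb'].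
  2:{ exfalso. apply (Hd s). exact (@sn_In s _ _ Hin Ha). exact (@sn_In s _ _ Hb' Hb). }
  destruct (in_split _ _ Hb') as [m1 [m2 Em]].
  exists (m1 ++ m2). split.
  - eapply perm_trans. apply Permutation_sym, Permutation_middle. rewrite Em.
    eapply perm_trans. apply perm_skip. apply Permutation_sym, Permutation_middle.
    eapply perm_trans. apply Permutation_cons_append. simpl.
    eapply perm_trans. apply Permutation_cons_append. rewrite <- app_assoc. simpl.
    apply Permutation_refl.
  - eapply rm_last. apply P2. rewrite Em. rewrite <- !app_assoc. simpl.
    apply Permutation_sym. apply Permutation_middle.
Qed.

Lemma disj_sym (A B : E) : disj A B -> disj B A.
Proof. unfold disj; eauto. Qed.

Lemma loc2 (F1 F2 D0 : E) s a b : named s a -> named s b -> disj F1 F2 ->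
  Permutation (F1 ++ F2) (D0 ++ [a; b]) ->
  (exists Xr, Permutation F1 (Xr ++ [a; b]) /\ Permutation D0 (Xr ++ F2)) \/
  (exists Xr, Permutation F2 (Xr ++ [a; b]) /\ Permutation D0 (Xr ++ F1)).
Proof.
  intros Ha Hb Hd P.
  assert (Hin : In a (F1 ++ F2)).
  { eapply Permutation_in. apply Permutation_sym, P. apply in_or_app; right; left; auto. }
  apply in_app_or in Hin. destruct Hin as [Hin|Hin].
  - left. eapply loc2_left; eauto.
  - right. eapply loc2_left; eauto. apply disj_sym; auto.
    eapply perm_trans; [apply Permutation_app_comm|exact P].
Qed.


Lemma safe_clauses (D : E) : safe D ->
    (forall D0 s p q bs Q l B Q',
        Permutation D (D0 ++ [EEndp s p (SBra q bs); EQueue s Q]) ->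
        qequiv Q ((q, p, l, B) :: Q') ->
        exists T, In (l, B, T) bs)
    /\ (forall D0 s p T,
        Permutation D (D0 ++ [EEndp s p (SRec T)]) ->
        safe (D0 ++ [EEndp s p (unfold T)]))
    /\ (forall D', env_step_cong D D' -> safe D').
Proof.
  intros [P [HP HD]]. destruct (HP D HD) as [H1 [H2 H3]].
  split; [exact H1|split].
  - intros. exists P; split; auto.
  - intros. exists P; split; auto.
Qed.

Lemma F2_two (X : E) a b : Forall2 ee X [a; b] ->
  exists a' b', X = [a'; b'] /\ ee a' a /\ ee b' b.
Proof.
  intros H. inversion H; subst. inversion H4; subst. inversion H6; subst. eauto.
Qed.

Lemma F2_one (X : E) a : Forall2 ee X [a] -> exists a', X = [a'] /\ ee a' a.
Proof. intros H. inversion H; subst. inversion H4; subst. eauto. Qed.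

Lemma ee_endp a s p T : ee a (EEndp s p T) -> a = EEndp s p T.
Proof. intros H; inversion H; auto. Qed.

Lemma ee_queue a s Q : ee a (EQueue s Q) -> exists Q0, a = EQueue s Q0 /\ qequiv Q0 Q.
Proof.
  intros H; inversion H; subst; eexists; split; eauto; apply rst_refl.
Qed.

Lemma safe_eqv (F D : E) : safe D -> eqv F D -> safe F.
Proof.
  intros HD HF. exists (fun F => exists D, safe D /\ eqv F D). split; [|eauto].
  clear. intros F [D [HD HF]]. destruct (safe_clauses HD) as [C1 [C2 C3]].
  split; [|split].
  - intros F0 s p q bs Q l B Q' P HQ.
    assert (H : eqv D (F0 ++ [EEndp s p (SBra q bs); EQueue s Q])).
    { apply eqv_sym. eapply eqv_trans; [apply eqv_perm, Permutation_sym, P|exact HF]. }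
    apply eqv_split in H. destruct H as [E0 [E1 [PE [H0 H1]]]].
    destruct (F2_two H1) as [a' [b' [-> [Ha Hb]]]].
    apply ee_endp in Ha; subst. destruct (ee_queue Hb) as [Q0 [-> HQ0]].
    eapply C1. exact PE. eapply rst_trans; eauto.
  - intros F0 s p T P.
    assert (H : eqv D (F0 ++ [EEndp s p (SRec T)])).
    { apply eqv_sym. eapply eqv_trans; [apply eqv_perm, Permutation_sym, P|exact HF]. }
    apply eqv_split in H. destruct H as [E0 [E1 [PE [H0 H1]]]].
    destruct (F2_one H1) as [a' [-> Ha]]. apply ee_endp in Ha; subst.
    exists (E0 ++ [EEndp s p (unfold T)]). split. eapply C2; eauto.
    apply eqv_app. apply eqv_sym, F2_eqv; auto. apply eqv_refl.
  - intros D' [Da [Db [H1 [H2 H3]]]]. exists D'. split; [|apply eqv_refl].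
    apply C3. exists Da, Db. split; auto. eapply eqv_trans; eauto. apply eqv_sym; auto.
Qed.


Definition Concl (F1 F2 Db : E) := exists G1 G2, safe G1 /\ safe G2 /\
  Permutation Db (G1 ++ G2) /\ (forall s, in_snames s G1 -> in_snames s F1) /\
  (forall s, in_snames s G2 -> in_snames s F2).

Lemma concl_swap F1 F2 Db : Concl F2 F1 Db -> Concl F1 F2 Db.
Proof.
  intros [G1 [G2 [H1 [H2 [H3 [H4 H5]]]]]]. exists G2, G1. repeat split; auto.
  eapply perm_trans; [exact H3|apply Permutation_app_comm].
Qed.

Lemma concl_mono F1 F1' F2 Db : (forall s, in_snames s F1' -> in_snames s F1) ->
  Concl F1' F2 Db -> Concl F1 F2 Db.
Proof.
  intros H [G1 [G2 [H1 [H2 [H3 [H4 H5]]]]]]. exists G1, G2. repeat split; auto.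
Qed.

Lemma perm_swap3 (X Y Z : E) : Permutation ((X ++ Y) ++ Z) ((X ++ Z) ++ Y).
Proof.
  rewrite <- !app_assoc. apply Permutation_app_head. apply Permutation_app_comm.
Qed.

Lemma side (X Y Xr Z Z' D0 Db : E) : safe X -> safe Y ->
  Permutation X (Xr ++ Z) -> Permutation D0 (Xr ++ Y) ->
  env_step X (Xr ++ Z') -> (forall s, in_snames s Z' -> in_snames s Z) ->
  Permutation Db (D0 ++ Z') -> Concl X Y Db.
Proof.
  intros HX HY P1 P2 St Hn P3. exists (Xr ++ Z'), Y. repeat split; auto.
  - destruct (safe_clauses HX) as [_ [_ C3]]. apply C3.
    exists X, (Xr ++ Z'). repeat split; auto; apply eqv_refl.
  - eapply perm_trans; [exact P3|]. eapply perm_trans.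
    apply Permutation_app_tail; exact P2. apply perm_swap3.
  - intros s Hs. eapply sn_perm; [apply Permutation_sym, P1|].
    apply sn_app in Hs. apply sn_app. destruct Hs; auto.
Qed.

Lemma sn_pair t s p T Q : in_snames t [@EEndp Role Label Payload s p T; EQueue s Q] -> in_snames t [EEndp s p T].
Proof.
  intros [e [H1 H2]]. exists (EEndp s p T). split; [left; auto|].
  destruct H1 as [<-|[<-|[]]]; simpl in *; auto.
Qed.

Lemma sn_pair' t s p T p' T' Q Q' : in_snames t [@EEndp Role Label Payload s p T; EQueue s Q] ->
  in_snames t [@EEndp Role Label Payload s p' T'; EQueue s Q'].
Proof.
  intros H. apply sn_pair in H. destruct H as [e [[<-|[]] H2]].
  exists (EEndp s p' T'). split; [left; auto|]. auto.
Qed.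

Lemma nm1 s p (T : stype Role Label Payload)   : named s (@EEndp Role Label Payload s p T).
Proof. reflexivity. Qed.
Lemma nm2 s (Q : queue Role Label Payload) : named s (@EQueue Role Label Payload s Q).
Proof. reflexivity. Qed.

Lemma core (D Db : E) : env_step D Db -> forall F1 F2, Permutation D (F1 ++ F2) ->
  safe F1 -> safe F2 -> disj F1 F2 -> Concl F1 F2 Db.
Proof.
  induction 1; intros F1 F2 PF S1 S2 Dj.
  - assert (P : Permutation (F1 ++ F2) (D0 ++ [EEndp s p (SSel q bs); EQueue s Q])).
    { eapply perm_trans; [apply Permutation_sym, PF| exact H]. }
    destruct (@loc2 F1 F2 D0 s _ _ (nm1 s p _) (nm2 s _) Dj P) as [[Xr [P1 P2]]|[Xr [P1 P2]]].
    + eapply side with (Z' := [EEndp s p T; EQueue s (Q ++ [(p, q, l, A)])]);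
        [exact S1|exact S2|exact P1|exact P2|eapply st_send; [exact P1|exact H0|apply Permutation_refl]
        |intros; eapply sn_pair'; eauto|exact H1].
    + apply concl_swap. eapply side with (Z' := [EEndp s p T; EQueue s (Q ++ [(p, q, l, A)])]);
        [exact S2|exact S1|exact P1|exact P2|eapply st_send; [exact P1|exact H0|apply Permutation_refl]
        |intros; eapply sn_pair'; eauto|exact H1].
  - assert (P : Permutation (F1 ++ F2) (D0 ++ [EEndp s p (SBra q bs); EQueue s ((q, p, l, A) :: Q)])).
    { eapply perm_trans; [apply Permutation_sym, PF| exact H]. }
    destruct (@loc2 F1 F2 D0 s _ _ (nm1 s p _) (nm2 s _) Dj P) as [[Xr [P1 P2]]|[Xr [P1 P2]]].
    + eapply side with (Z' := [EEndp s p T; EQueue s Q]);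
        [exact S1|exact S2|exact P1|exact P2|eapply st_recv; [exact P1|exact H0|apply Permutation_refl]
        |intros; eapply sn_pair'; eauto|exact H1].
    + apply concl_swap. eapply side with (Z' := [EEndp s p T; EQueue s Q]);
        [exact S2|exact S1|exact P1|exact P2|eapply st_recv; [exact P1|exact H0|apply Permutation_refl]
        |intros; eapply sn_pair'; eauto|exact H1].
  - assert (P : Permutation (F1 ++ F2) (D0 ++ [EEndp s p (SEnd Role Label Payload)])).
    { eapply perm_trans; [apply Permutation_sym, PF| exact H]. }
    destruct (@loc1 F1 F2 D0 _ P) as [[Xr [P1 P2]]|[Xr [P1 P2]]].
    + eapply side with (Z' := []);
        [exact S1|exact S2|exact P1|exact P2|eapply st_end; [exact P1|rewrite app_nil_r; apply Permutation_refl]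
        |intros t [e [[] _]]|rewrite app_nil_r; exact H0].
    + apply concl_swap. eapply side with (Z' := []);
        [exact S2|exact S1|exact P1|exact P2|eapply st_end; [exact P1|rewrite app_nil_r; apply Permutation_refl]
        |intros t [e [[] _]]|rewrite app_nil_r; exact H0].
  - assert (P : Permutation (F1 ++ F2) (D0 ++ [EEndp s p (SRec T)])).
    { eapply perm_trans; [apply Permutation_sym, PF| exact H]. }
    assert (Hsn : forall X Xr t, Permutation X (Xr ++ [EEndp s p (SRec T)]) ->
              in_snames t (Xr ++ [EEndp s p (unfold T)]) -> in_snames t X).
    { intros X Xr t PX Ht. eapply sn_perm; [apply Permutation_sym, PX|].
      apply sn_app in Ht; apply sn_app. destruct Ht as [Ht|[e [[<-|[]] Ht]]]; auto.
      right. exists (EEndp s p (SRec T)). split; [left|]; auto. }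
    destruct (@loc1 F1 F2 D0 _ P) as [[Xr [P1 P2]]|[Xr [P1 P2]]].
    + apply concl_mono with (Xr ++ [EEndp s p (unfold T)]).
      { intros; eapply Hsn; eauto. }
      apply IHenv_step; auto.
      * rewrite <- app_assoc. eapply perm_trans. apply Permutation_app_tail; exact P2.
        rewrite <- app_assoc. apply Permutation_app_head. apply Permutation_app_comm.
      * destruct (safe_clauses S1) as [_ [C2 _]]. eapply C2; eauto.
      * intros t A B. apply (Dj t); auto. eapply Hsn; eauto.
    + apply concl_swap.
      apply concl_mono with (Xr ++ [EEndp s p (unfold T)]).
      { intros; eapply Hsn; eauto. }
      apply IHenv_step; auto.
      * rewrite <- app_assoc. eapply perm_trans. apply Permutation_app_tail; exact P2.
        rewrite <- app_assoc. apply Permutation_app_head. apply Permutation_app_comm.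
      * destruct (safe_clauses S2) as [_ [C2 _]]. eapply C2; eauto.
      * intros t A B. apply (Dj t); auto. eapply Hsn; eauto.
Qed.


Definition PP (D : E) := exists E1 E2, safe E1 /\ safe E2 /\ disj E1 E2 /\ Permutation D (E1 ++ E2).

Lemma PP_swap (D E1 E2 : E) : safe E1 -> safe E2 -> disj E1 E2 -> Permutation D (E2 ++ E1) -> PP D.
Proof.
  intros. exists E2, E1. repeat split; auto. apply disj_sym; auto.
Qed.

Lemma rec_side (X Y Xr D0 : E) s p T : safe X -> disj X Y ->
  Permutation X (Xr ++ [EEndp s p (SRec T)]) -> Permutation D0 (Xr ++ Y) ->
  exists G, safe G /\ disj G Y /\ Permutation (D0 ++ [EEndp s p (unfold T)]) (G ++ Y).
Proof.
  intros HX Dj P1 P2. exists (Xr ++ [EEndp s p (unfold T)]). split; [|split].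
  - destruct (safe_clauses HX) as [_ [C2 _]]. eapply C2; eauto.
  - intros t Ht Hy. apply (Dj t); auto. eapply sn_perm; [apply Permutation_sym, P1|].
    apply sn_app in Ht; apply sn_app. destruct Ht as [Ht|[e [[<-|[]] Ht]]]; auto.
    right. exists (EEndp s p (SRec T)). split; [left|]; auto.
  - rewrite <- app_assoc. eapply perm_trans. apply Permutation_app_tail; exact P2.
    rewrite <- app_assoc. apply Permutation_app_head. apply Permutation_app_comm.
Qed.

Lemma PP_safety : safety_prop PP.
Proof.
  intros D [E1 [E2 [S1 [S2 [Dj PD]]]]]. split; [|split].
  - intros D0 s p q bs Q l B Q' P HQ.
    assert (P' : Permutation (E1 ++ E2) (D0 ++ [EEndp s p (SBra q bs); EQueue s Q])).
    { eapply perm_trans; [apply Permutation_sym, PD| exact P]. }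
    destruct (@loc2 E1 E2 D0 s _ _ (nm1 s p _) (nm2 s _) Dj P') as [[Xr [P1 P2]]|[Xr [P1 P2]]].
    + destruct (safe_clauses S1) as [C1 _]. eapply C1; eauto.
    + destruct (safe_clauses S2) as [C1 _]. eapply C1; eauto.
  - intros D0 s p T P.
    assert (P' : Permutation (E1 ++ E2) (D0 ++ [EEndp s p (SRec T)])).
    { eapply perm_trans; [apply Permutation_sym, PD| exact P]. }
    destruct (@loc1 E1 E2 D0 _ P') as [[Xr [P1 P2]]|[Xr [P1 P2]]].
    + destruct (@rec_side E1 E2 Xr D0 s p T S1 Dj P1 P2) as [G [SG [DG PG]]].
      exists G, E2. repeat split; auto.
    + destruct (@rec_side E2 E1 Xr D0 s p T S2 (disj_sym Dj) P1 P2) as [G [SG [DG PG]]].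
      eapply PP_swap; [exact SG|exact S1|exact DG|].
      eapply perm_trans; [exact PG|apply Permutation_app_comm].
  - intros D' [Da [Db [H1 [H2 H3]]]].
    assert (Ha : eqv Da (E1 ++ E2)).
    { eapply eqv_trans; [apply eqv_sym; exact H1|apply eqv_perm; exact PD]. }
    apply eqv_split in Ha. destruct Ha as [F1 [F2 [PF [HF1 HF2]]]].
    assert (SF1 : safe F1) by (eapply safe_eqv; [exact S1|apply F2_eqv; exact HF1]).
    assert (SF2 : safe F2) by (eapply safe_eqv; [exact S2|apply F2_eqv; exact HF2]).
    assert (DF : disj F1 F2).
    { intros t A B. apply (Dj t); eapply sn_F2; eauto. }
    destruct (core H2 PF SF1 SF2 DF) as [G1 [G2 [SG1 [SG2 [PG [N1 N2]]]]]].
    assert (Hb : eqv D' (G1 ++ G2)).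
    { eapply eqv_trans; [apply eqv_sym; exact H3|apply eqv_perm; exact PG]. }
    apply eqv_split in Hb. destruct Hb as [K1 [K2 [PK [HK1 HK2]]]].
    exists K1, K2. split; [|split; [|split]].
    + eapply safe_eqv; [exact SG1|apply F2_eqv; exact HK1].
    + eapply safe_eqv; [exact SG2|apply F2_eqv; exact HK2].
    + intros t A B. apply (Dj t).
      * eapply sn_F2; [exact HF1|]. apply N1. eapply sn_F2; eauto.
      * eapply sn_F2; [exact HF2|]. apply N2. eapply sn_F2; eauto.
    + exact PK.
Qed.

End S.

Theorem lemmaB9 (Role Label Payload : Type) (D1 D2 : env Role Label Payload) :
  safe D1 -> safe D2 ->
  (forall s : nat, in_snames s D1 -> in_snames s D2 -> False) ->
  env_wf D1 -> env_wf D2 -> env_union_defined D1 D2 ->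
  safe (D1 ++ D2).
Proof.
  intros S1 S2 Dj _ _ _. exists (@PP Role Label Payload). split.
  - apply PP_safety.
  - exists D1, D2. repeat split; auto.
Qed.
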